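(* Let $\mathcal V$ be a multivector field on $X$ and $S\subset X$. If $S$ is an isolated invariant set, then $S$ is locally closed.
   Context: $X$ is a finite $T_0$ topological space. For $A\subset X$, $\operatorname{cl}A$ is its closure and $\operatorname{mo}A:=\operatorname{cl}A\setminus A$. $A$ is locally closed if it is the intersection of an open and a closed subset of $X$. $H$ denotes relative singular homology. A multivector is a nonempty locally closed subset of $X$; a multivector field $\mathcal V$ on $X$ is a partition of $X$ into multivectors. For $x\in X$, $[x]$ denotes the element of $\mathcal V$ containing $x$. A multivector $V$ is critical if $H(\operatorname{cl}V,\operatorname{mo}V)\neq0$, regular otherwise. Put $\Pi_{\mathcal V}(x):=[x]\cup\operatorname{cl}\{x\}$ and $\Pi_{\mathcal V}(A):=\bigcup_{x\in A}\Pi_{\mathcal V}(x)$. A $\mathbb Z$-interval is $\mathbb Z\cap I$ for a real interval $I$. A solution in $A\subset X$ is a map $\varphi:D\to A$ on a $\mathbb Z$-interval $D$ with $\varphi(i+1)\in\Pi_{\mathcal V}(\varphi(i))$ whenever $i,i+1\in D$; it is full if $D=\mathbb Z$, and a path if $D$ is bounded, its endpoints being $\varphi(\min D)$ and $\varphi(\max D)$. A full solution $\varphi$ is essential if for every $t\in\mathbb Z$ with $[\varphi(t)]$ regular, the set $\{s\in\mathbb Z:\varphi(s)\notin[\varphi(t)]\}$ is unbounded below and unbounded above. $\operatorname{Inv}A$ is the set of $x\in A$ such that there is an essential full solution $\varphi$ with image in $A$ and $\varphi(0)=x$; $A$ is invariant if $\operatorname{Inv}A=A$. A closed set $N$ isolates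 an invariant set $S\subset N$ if (a) every path in $N$ with both endpoints in $S$ has image contained in $S$, and (b) $\Pi_{\mathcal V}(S)\subset N$. An invariant set is an isolated invariant set if some closed set isolates it. *)

(* Defs.v *)
From Stdlib Require Import Reals ZArith List ClassicalEpsilon.
Import ListNotations.

Set Implicit Arguments.

Section Top.
Variable X : Type.
Variable op : (X -> Prop) -> Prop.

Definition is_finite_T0_space : Prop :=
  (exists l : list X, forall x, In x l) /\
  op (fun _ => True) /\
  op (fun _ => False) /\
  (forall F : (X -> Prop) -> Prop, (forall U, F U -> op U) ->
      op (fun x => exists U, F U /\ U x)) /\
  (forall U V, op U -> op V -> op (fun x => U x /\ V x)) /\
  (forall U V, op U -> (forall x, U x <-> V x) -> op V) /\
  (forall x y, x <> y -> exists U, op U /\ ~ (U x <-> U y)).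

Definition is_closed (C : X -> Prop) : Prop := op (fun x => ~ C x).

Definition cl (A : X -> Prop) : X -> Prop :=
  fun x => forall C, is_closed C -> (forall y, A y -> C y) -> C x.

Definition mo (A : X -> Prop) : X -> Prop := fun x => cl A x /\ ~ A x.

Definition locally_closed (A : X -> Prop) : Prop :=
  exists U C, op U /\ is_closed C /\ forall x, A x <-> (U x /\ C x).

Definition in_simplex (n : nat) (p : nat -> R) : Prop :=
  (forall i, (i <= n)%nat -> (0 <= p i)%R) /\
  (forall i, (n < i)%nat -> p i = 0%R) /\
  sum_f_R0 p n = 1%R.

Definition rel_open (n : nat) (P : (nat -> R) -> Prop) : Prop :=
  forall p, in_simplex n p -> P p ->
    exists eps, (0 < eps)%R /\
      forall q, in_simplex n q ->
        (forall i, (i <= n)%nat -> (Rabs (q i - p i) < eps)%R) -> P q.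

(* A singular n-simplex is a map from the standard simplex; we extend it by
   None outside the simplex so that equality of simplices is equality of maps
   on the standard simplex. *)
Definition simplex := (nat -> R) -> option X.

Definition sing_simplex (n : nat) (A : X -> Prop) (s : simplex) : Prop :=
  (forall p, ~ in_simplex n p -> s p = None) /\
  (forall p, in_simplex n p -> exists x, s p = Some x /\ A x) /\
  (forall U, op U -> rel_open n (fun p => exists x, s p = Some x /\ U x)).

(* i-th face inclusion Delta^(m) -> Delta^(m+1) *)
Definition coface (i : nat) (p : nat -> R) : nat -> R :=
  fun j => if Nat.ltb j i then p j else if Nat.eqb j i then 0%R else p (j - 1)%nat.

Definition face (m i : nat) (s : simplex) : simplex :=
  fun p => if excluded_middle_informative (in_simplex m p)
           then s (coface i p) else None.

Definition chain := list (Z * simplex).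

Definition coef (c : chain) (t : simplex) : Z :=
  fold_right (fun e acc =>
     ((if excluded_middle_informative (snd e = t) then fst e else 0) + acc)%Z) 0%Z c.

(* boundary of a chain of (m+1)-simplices *)
Definition bd (m : nat) (c : chain) : chain :=
  flat_map (fun e =>
     map (fun i => ((if Nat.even i then fst e else - fst e)%Z, face m i (snd e)))
         (seq 0 (S (S m)))) c.

Definition chain_in (n : nat) (A : X -> Prop) (c : chain) : Prop :=
  Forall (fun e => sing_simplex n A (snd e)) c.

(* H_n(A,B) <> 0 for some n: some relative cycle is not a relative boundary *)
Definition homology_nonzero (A B : X -> Prop) : Prop :=
  exists (n : nat) (c : chain),
    chain_in n A c /\
    (match n with
     | O => True
     | S m => exists d, chain_in m B d /\ forall t, coef (bd m c) t = coef d t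
     end) /\
    ~ (exists e f, chain_in (S n) A e /\ chain_in n B f /\
         forall t, coef c t = (coef (bd n e) t + coef f t)%Z).

(* A partition of X is given by an equivalence relation Vr; [x] = Vr x. *)
Definition is_mvf (Vr : X -> X -> Prop) : Prop :=
  (forall x, Vr x x) /\ (forall x y, Vr x y -> Vr y x) /\
  (forall x y z, Vr x y -> Vr y z -> Vr x z) /\
  (forall x, locally_closed (Vr x)).

Definition critical (V : X -> Prop) : Prop := homology_nonzero (cl V) (mo V).

Definition Pi (Vr : X -> X -> Prop) (x : X) : X -> Prop :=
  fun y => Vr x y \/ cl (fun z => z = x) y.

Definition Pi_set (Vr : X -> X -> Prop) (A : X -> Prop) : X -> Prop :=
  fun y => exists x, A x /\ Pi Vr x y.

Definition full_solution (Vr : X -> X -> Prop) (phi : Z -> X) : Prop :=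
  forall i, Pi Vr (phi i) (phi (i + 1)%Z).

Definition essential (Vr : X -> X -> Prop) (phi : Z -> X) : Prop :=
  full_solution Vr phi /\
  forall t, ~ critical (Vr (phi t)) ->
    (forall m, exists s, (s <= m)%Z /\ ~ Vr (phi t) (phi s)) /\
    (forall m, exists s, (m <= s)%Z /\ ~ Vr (phi t) (phi s)).

Definition Inv (Vr : X -> X -> Prop) (A : X -> Prop) : X -> Prop :=
  fun x => exists phi, essential Vr phi /\ (forall t, A (phi t)) /\ phi 0%Z = x.

Definition invariant (Vr : X -> X -> Prop) (A : X -> Prop) : Prop :=
  forall x, Inv Vr A x <-> A x.

(* A path is a solution on a bounded (nonempty) Z-interval [a,b]. *)
Definition isolates (Vr : X -> X -> Prop) (N S : X -> Prop) : Prop :=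
  is_closed N /\ (forall x, S x -> N x) /\
  (forall (phi : Z -> X) (a b : Z), (a <= b)%Z ->
     (forall i, (a <= i < b)%Z -> Pi Vr (phi i) (phi (i + 1)%Z)) ->
     (forall i, (a <= i <= b)%Z -> N (phi i)) ->
     S (phi a) -> S (phi b) ->
     forall i, (a <= i <= b)%Z -> S (phi i)) /\
  (forall y, Pi_set Vr S y -> N y).

Definition isolated_invariant (Vr : X -> X -> Prop) (S : X -> Prop) : Prop :=
  invariant Vr S /\ exists N, isolates Vr N S.

End Top.

(* Main.v *)
Require Import Defs.
From Stdlib Require Import Reals ZArith List ClassicalEpsilon.
From Stdlib Require Import Classical Lia.

Section Aux.
Variable X : Type.
Variable op : (X -> Prop) -> Prop.
Hypothesis Hsp : is_finite_T0_space op.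

Lemma cl_closed (A : X -> Prop) : is_closed op (cl op A).
Proof.
  destruct Hsp as [_ [_ [_ [Hun [_ [Hext _]]]]]].
  unfold is_closed.
  pose (F := (fun U : X -> Prop => exists C, is_closed op C /\ (forall y, A y -> C y)
                                /\ forall x, U x <-> ~ C x)).
  assert (HF : forall U, F U -> op U).
  { intros U [C [HC [_ HU]]]. apply (Hext (fun x => ~ C x)); [exact HC|].
    intros x; split; apply HU. }
  apply (Hext _ _ (Hun F HF)).
  intros x; split.
  - intros [U [[C [HC [HAC HU]]] HUx]] Hcl. apply HU in HUx. apply HUx.
    apply Hcl; assumption.
  - intros Hn. unfold cl in Hn.
    apply not_all_ex_not in Hn as [C Hn].
    apply imply_to_and in Hn as [HC Hn].
    apply imply_to_and in Hn as [HAC HCx].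
    exists (fun x => ~ C x). split; [|exact HCx].
    exists C. repeat split; auto.
Qed.

Lemma cl_incl (A : X -> Prop) x : A x -> cl op A x.
Proof. intros Ha C _ H. apply H, Ha. Qed.

Lemma cl_point (A : X -> Prop) x : cl op A x -> exists a, A a /\ cl op (fun w => w = a) x.
Proof.
  destruct Hsp as [[l Hl] [HT [_ [_ [Hint [Hext _]]]]]].
  intros Hx.
  pose (D := (fun w => exists a, A a /\ cl op (fun v => v = a) w)).
  assert (Hop : forall l : list X, op (fun w => forall a, In a l -> A a -> ~ cl op (fun v => v = a) w)).
  { intros l0; induction l0 as [|b l0 IH].
    - apply (Hext (fun _ => True)); [exact HT|]. intros w; split; [intros _ a []|auto].
    - destruct (classic (A b)) as [Hb|Hb].
      + apply (Hext _ _ (Hint _ _ (cl_closed (fun v => v = b)) IH)).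
        intros w; split.
        * intros [H1 H2] a [<-|Ha] HA; auto.
        * intros H; split; [apply H; simpl; auto|]. intros a Ha HA; apply H; simpl; auto.
      + apply (Hext _ _ IH). intros w; split.
        * intros H a [<-|Ha] HA; [contradiction|]. apply H; auto.
        * intros H a Ha HA; apply H; simpl; auto. }
  assert (HD : is_closed op D).
  { unfold is_closed. apply (Hext _ _ (Hop l)). intros w; split.
    - intros H [a [HA Hc]]. apply (H a (Hl a) HA Hc).
    - intros H a _ HA Hc. apply H. exists a; auto. }
  apply (Hx D HD). intros y Hy. exists y. split; auto. apply cl_incl. reflexivity.
Qed.
End Aux.

Theorem proposition4p11 (X : Type) (op : (X -> Prop) -> Prop)
  (Vr : X -> X -> Prop) (S : X -> Prop) :
  is_finite_T0_space op ->
  is_mvf op Vr ->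
  isolated_invariant op Vr S ->
  locally_closed op S.
Proof.
  intros Hsp _ [_ [N [_ [HSN [Hpath HPN]]]]].
  exists (fun x => ~ cl op (mo op S) x), (cl op S).
  split; [exact (@cl_closed X op Hsp (mo op S))|].
  split; [exact (@cl_closed X op Hsp S)|].
  intros x; split.
  - intros Hx. split; [|apply cl_incl; exact Hx].
    intros Hc. apply (@cl_point X op Hsp) in Hc as [y [[Hy1 Hy2] Hxy]].
    apply (@cl_point X op Hsp) in Hy1 as [z [Hz Hyz]].
    apply Hy2.
    pose (phi := (fun i : Z => if Z.eqb i 0 then z else if Z.eqb i 1 then y else x)).
    assert (HyN : N y).
    { apply HPN. exists z. split; auto. right. exact Hyz. }
    assert (H := Hpath phi 0%Z 2%Z ltac:(lia)).
    refine (H _ _ _ _ 1%Z ltac:(lia)).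
    + intros i Hi. assert (i = 0 \/ i = 1)%Z as [->| ->] by lia; simpl; right; assumption.
    + intros i Hi. unfold phi.
      destruct (Z.eqb i 0); [apply HSN; auto|]. destruct (Z.eqb i 1); auto.
    + exact Hz.
    + exact Hx.
  - intros [H1 H2]. apply NNPP. intros Hn. apply H1. apply cl_incl. split; auto.
Qed.
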